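(* For $i,j\in J$ put $h_{ij}:=H(b_i\otimes b_j)=\min\{i,2-j\}$. The following nine vectors belong to $N$: $C_{b_0,b_0}=v_0\otimes v_0$, $C_{b_0,b_1}=v_0\otimes v_1+q^2v_1\otimes v_0$, $C_{b_0,b_2}=v_0\otimes v_2+q\,v_1\otimes v_1+q^4v_2\otimes v_0$, $C_{b_1,b_2}=v_1\otimes v_2+q^2v_2\otimes v_1$, $C_{b_2,b_2}=v_2\otimes v_2$, $C_{zb_2,b_1}=zv_2\otimes v_1+q^2v_1\otimes zv_2$, $C_{z^2b_2,b_0}=z^2v_2\otimes v_0+q\,zv_1\otimes zv_1+q^4v_0\otimes z^2v_2$, $C_{zb_1,b_0}=zv_1\otimes v_0+q^2v_0\otimes zv_1$, $C_{zb_1,b_1}=zv_1\otimes v_1+q^2v_1\otimes zv_1+q^2[2](v_0\otimes zv_2+zv_2\otimes v_0)$. These are exactly the elements $C_{z^{h_{ij}}b_i,b_j}$, one for each pair $(i,j)\in J\times J$. Moreover, for each $(i,j)$, letting $\mathcal B_{i,j}=\{(b,b')\in B_{\mathrm{aff}}\times B_{\mathrm{aff}}: H(b\otimes b')>0,\ l(b_j)\le l(b)<l(z^{h_{ij}}b_i),\ l(b_j)<l(b')\le l(z^{h_{ij}}b_i)\}$, the element $C_{z^{h_{ij}}b_i,b_j}$ has the form $G(z^{h_{ij}}b_i)\otimes G(b_j)-\sum_{(b,b')\in\mathcal B_{i,j}}a_{b,b'}\,G(b)\otimes G(b')$ with all coefficients $a_{b,b'}\in q\mathbb Z[q]$, and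 $H(z^{h_{ij}}b_i\otimes b_j)=0$.
   Context: Let $\mathfrak g=\widehat{\mathfrak{sl}}_2$, $I=\{0,1\}$, weight lattice $P=\mathbb Z\Lambda_0\oplus\mathbb Z\Lambda_1\oplus\mathbb Z\delta$, coroots $h_0,h_1$ with $\langle h_i,\Lambda_j\rangle=\delta_{ij}$, $\langle h_i,\delta\rangle=0$, central element $c=h_0+h_1$. $U_q(\mathfrak g)$ is the quantum affine algebra over $\mathbb Q(q)$ with generators $e_i,f_i$ ($i\in I$), $q^h$ ($h\in P^*$), $t_i=q^{h_i}$, and coproduct $\Delta(q^h)=q^h\otimes q^h$, $\Delta(e_i)=e_i\otimes1+t_i^{-1}\otimes e_i$, $\Delta(f_i)=f_i\otimes t_i+1\otimes f_i$. $[n]=(q^n-q^{-n})/(q-q^{-1})$. Let $J=\{0,1,2\}$. $V_{\mathrm{aff}}$ is the $\mathbb Q(q)$-space with basis $z^av_j$ ($a\in\mathbb Z$, $j\in J$), a $U_q(\mathfrak g)$-module via: $\mathrm{wt}(z^av_j)=2(1-j)(\Lambda_1-\Lambda_0)+a\delta$, $q^hz^av_j=q^{\langle h,\mathrm{wt}(z^av_j)\rangle}z^av_j$, $e_1z^av_j=[3-j]z^av_{j-1}$, $f_1z^av_j=[j+1]z^av_{j+1}$, $e_0z^av_j=[j+1]z^{a+1}v_{j+1}$, $f_0z^av_j=[3-j]z^{a-1}v_{j-1}$ (with $v_{-1}=v_3=0$). The operator $z^b$ sends $z^av_j\mapsto z^{a+b}v_j$. The crystal of $V_{\mathrm{aff}}$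 is $B_{\mathrm{aff}}=\{z^ab_j: a\in\mathbb Z, j\in J\}$ with lower global base $G(z^ab_j)=z^av_j$. Define $l(z^ab_j)=2a-j$ and the energy function $H(z^ab_i\otimes z^{a'}b_j)=\min\{i,2-j\}-a+a'$. $N\subset V_{\mathrm{aff}}\otimes V_{\mathrm{aff}}$ is the smallest subspace containing $v_0\otimes v_0$ that is stable under the action of $U_q(\mathfrak g)$ (via $\Delta$) and under the operators $z\otimes z$, $z^{-1}\otimes z^{-1}$, $z\otimes1+1\otimes z$. *)

(* Defs.v *)
From HB Require Import structures.
From mathcomp Require Import all_boot all_order all_algebra.
Set Implicit Arguments. Unset Strict Implicit. Unset Printing Implicit Defensive.
Import Order.TTheory GRing.Theory Num.Theory.
Local Open Scope ring_scope.

Definition K : fieldType := {fraction {poly rat}}.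
Definition q : K := FracField.tofrac ('X : {poly rat}).

Definition qint (n : int) : K := (q ^ n - q ^ (- n)) / (q - q^-1).

(* Crystal/basis of V_aff: (a, j) stands for z^a b_j, with G(z^a b_j) = z^a v_j. *)
Definition B := (int * 'I_3)%type.

(* weight of z^a v_j in coordinates w.r.t. (Lambda_0, Lambda_1, delta):
   2(1-j)(Lambda_1 - Lambda_0) + a delta *)
Definition wtp (b : B) : int * int * int :=
  let j := ((b.2 : nat) : int) in (- (2 * (1 - j)), 2 * (1 - j), b.1).

(* P^* = Z h_0 + Z h_1 + Z d, dual basis to (Lambda_0, Lambda_1, delta). *)
Definition pairing (h w : int * int * int) : int :=
  h.1.1 * w.1.1 + h.1.2 * w.1.2 + h.2 * w.2.

Definition hvec (i : 'I_2) : int * int * int :=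
  if (i : nat) == 0%N then (1, 0, 0) else (0, 1, 0).

(* An operator on V_aff sending each basis vector to a scalar multiple of a
   basis vector: b |-> (c, b') means b |-> c * b'. *)
Definition vop := B -> K * B.

Definition jup (j : 'I_3) : 'I_3 := inord j.+1.
Definition jdn (j : 'I_3) : 'I_3 := inord j.-1.

Definition vz (k : int) : vop := fun b => (1, (b.1 + k, b.2)).
Definition vid : vop := vz 0.
Definition vq (h : int * int * int) : vop := fun b => (q ^ pairing h (wtp b), b).
Definition vt (i : 'I_2) : vop := fun b => (q ^ pairing (hvec i) (wtp b), b).
Definition vtinv (i : 'I_2) : vop := fun b => (q ^ (- pairing (hvec i) (wtp b)), b).

(* e_1 z^a v_j = [3-j] z^a v_{j-1};  e_0 z^a v_j = [j+1] z^{a+1} v_{j+1} *)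
Definition ve (i : 'I_2) : vop := fun b =>
  let j := (b.2 : nat) in
  if (i : nat) == 0%N then
    (if j == 2%N then (0, b) else (qint (j.+1 : nat), (b.1 + 1, jup b.2)))
  else
    (if j == 0%N then (0, b) else (qint ((3 - j)%N : nat), (b.1, jdn b.2))).

(* f_1 z^a v_j = [j+1] z^a v_{j+1};  f_0 z^a v_j = [3-j] z^{a-1} v_{j-1} *)
Definition vf (i : 'I_2) : vop := fun b =>
  let j := (b.2 : nat) in
  if (i : nat) == 0%N then
    (if j == 0%N then (0, b) else (qint ((3 - j)%N : nat), (b.1 - 1, jdn b.2)))
  else
    (if j == 2%N then (0, b) else (qint (j.+1 : nat), (b.1, jup b.2))).

(* Elements of V_aff (x) V_aff as formal finite sums  sum c * (b (x) b'). *)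
Definition tens := seq (K * (B * B)).

Definition coef (s : tens) (p : B * B) : K :=
  \sum_(x <- s) (if x.2 == p then x.1 else 0).

Definition tscale (c : K) (s : tens) : tens := [seq (c * x.1, x.2) | x <- s].

Definition top (A C : vop) (s : tens) : tens :=
  [seq (x.1 * (A x.2.1).1 * (C x.2.2).1, ((A x.2.1).2, (C x.2.2).2)) | x <- s].

Definition Delta_e (i : 'I_2) (s : tens) : tens := top (ve i) vid s ++ top (vtinv i) (ve i) s.
Definition Delta_f (i : 'I_2) (s : tens) : tens := top (vf i) (vt i) s ++ top vid (vf i) s.
Definition Delta_q (h : int * int * int) (s : tens) : tens := top (vq h) (vq h) s.
Definition zz (s : tens) : tens := top (vz 1) (vz 1) s.
Definition zzinv (s : tens) : tens := top (vz (-1)) (vz (-1)) s.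
Definition zsum (s : tens) : tens := top (vz 1) vid s ++ top vid (vz 1) s.

Definition b00 : B * B := ((0, inord 0), (0, inord 0)).

(* Membership is up to equality of coefficients. *)
Inductive inN : tens -> Prop :=
| N_base : inN [:: (1, b00)]
| N_add s t : inN s -> inN t -> inN (s ++ t)
| N_scale c s : inN s -> inN (tscale c s)
| N_e i s : inN s -> inN (Delta_e i s)
| N_f i s : inN s -> inN (Delta_f i s)
| N_q h s : inN s -> inN (Delta_q h s)
| N_zz s : inN s -> inN (zz s)
| N_zzinv s : inN s -> inN (zzinv s)
| N_zsum s : inN s -> inN (zsum s)
| N_ext s t : inN s -> coef s =1 coef t -> inN t.

Definition Hen (b b' : B) : int := (minn b.2 (2 - b'.2) : nat)%:Z - b.1 + b'.1.

Definition lfun (b : B) : int := 2 * b.1 - ((b.2 : nat) : int).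

Definition hij (i j : 'I_3) : int := Hen (0, i) (0, j).

Definition lead (i j : 'I_3) : B * B := ((hij i j, i), (0, j)).

Definition inBij (i j : 'I_3) (p : B * B) : bool :=
  [&& 0 < Hen p.1 p.2,
      lfun (0, j) <= lfun p.1 < lfun (hij i j, i) &
      lfun (0, j) < lfun p.2 <= lfun (hij i j, i)].

Definition in_qZq (x : K) : Prop :=
  exists (n : nat) (c : nat -> int), x = \sum_(k < n) (c k)%:~R * q ^+ k.+1.

Definition mk (c : K) (a : int) (i : nat) (a' : int) (j : nat) : K * (B * B) :=
  (c, ((a, inord i), (a', inord j))).

Definition Cvec (i j : nat) : tens :=
  match i, j with
  | 0, 0 => [:: mk 1 0 0 0 0]
  | 0, 1 => [:: mk 1 0 0 0 1; mk (q ^+ 2) 0 1 0 0]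
  | 0, 2 => [:: mk 1 0 0 0 2; mk q 0 1 0 1; mk (q ^+ 4) 0 2 0 0]
  | 1, 2 => [:: mk 1 0 1 0 2; mk (q ^+ 2) 0 2 0 1]
  | 2, 2 => [:: mk 1 0 2 0 2]
  | 2, 1 => [:: mk 1 1 2 0 1; mk (q ^+ 2) 0 1 1 2]
  | 2, 0 => [:: mk 1 2 2 0 0; mk q 1 1 1 1; mk (q ^+ 4) 0 0 2 2]
  | 1, 0 => [:: mk 1 1 1 0 0; mk (q ^+ 2) 0 0 1 1]
  | 1, 1 => [:: mk 1 1 1 0 1; mk (q ^+ 2) 0 1 1 1;
               mk (q ^+ 2 * qint 2) 0 0 1 2; mk (q ^+ 2 * qint 2) 1 2 0 0]
  | _, _ => [::]
  end.

(* Main.v *)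
Require Import Defs.
From HB Require Import structures.
From mathcomp Require Import all_boot all_order all_algebra.
From mathcomp Require Import ring.
Import Order.TTheory GRing.Theory Num.Theory.
Local Open Scope ring_scope.

Definition i0 : 'I_2 := ord0.
Definition i1 : 'I_2 := ord_max.

Lemma q_neq0 : q != 0.
Proof. by rewrite /q tofrac_eq0 polyX_eq0. Qed.

Lemma qsq_neq1 : q ^+ 2 - 1 != 0.
Proof.
rewrite /q -tofracXn -(tofrac1 {poly rat}) -tofracB tofrac_eq0.
by rewrite -size_poly_eq0 size_Xn_sub_1.
Qed.

Lemma qmqi_neq0 : q - q^-1 != 0.
Proof.
apply/negP => /eqP H; move/eqP: qsq_neq1; apply.
have := q_neq0 => nz.
have : (q - q^-1) * q = 0 by rewrite H mul0r.
rewrite mulrBl mulVf // => /eqP; rewrite subr_eq0 => /eqP E; by rewrite expr2 E subrr.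
Qed.

Lemma qPos n : q ^ (Posz n) = q ^+ n. Proof. by []. Qed.
Lemma qNeg n : q ^ (Negz n) = (q ^+ n.+1)^-1. Proof. by []. Qed.







Lemma tofrac_nz (p : {poly rat}) : p.[1] != 0 -> (FracField.tofrac p : K) != 0.
Proof. by apply: contra; rewrite tofrac_eq0 => /eqP->; rewrite horner0. Qed.

Lemma nz2 : q ^+ 2 + 1 != 0.
Proof.
have -> : q ^+ 2 + 1 = FracField.tofrac ('X^2 + 1 : {poly rat}).
  by rewrite tofracD tofracXn tofrac1.
by apply: tofrac_nz; rewrite hornerD hornerXn hornerC.
Qed.
Lemma nz3 : q ^+ 4 + q ^+ 2 + 1 != 0.
Proof.
have -> : q ^+ 4 + q^+2 + 1 = FracField.tofrac ('X^4 + 'X^2 + 1 : {poly rat}).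
  by rewrite !tofracD !tofracXn tofrac1.
by apply: tofrac_nz; rewrite !hornerD !hornerXn hornerC.
Qed.
Lemma nz4 : q ^+ 4 + 1 != 0.
Proof.
have -> : q ^+ 4 + 1 = FracField.tofrac ('X^4 + 1 : {poly rat}).
  by rewrite tofracD tofracXn tofrac1.
by apply: tofrac_nz; rewrite hornerD hornerXn hornerC.
Qed.

Strategy opaque [K q].
Lemma qV : q * q^-1 = 1. Proof. by rewrite mulfV // q_neq0. Qed.

Lemma qint_eq n (x : K) : q ^+ n - q^-1 ^+ n = x * (q - q^-1) -> qint (Posz n) = x.
Proof.
move=> E. rewrite /qint. case: n E => [|n] E.
  rewrite /= expr0 subrr in E.
  change (q ^ (Posz 0)) with (q ^+ 0); change (q ^ (- Posz 0)) with (q ^+ 0).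
  rewrite subrr mul0r.
  by apply/esym/eqP; move: E => /eqP; rewrite eq_sym mulf_eq0 (negbTE qmqi_neq0) orbF.
change (q ^ (Posz n.+1)) with (q ^+ n.+1).
change (q ^ (- Posz n.+1)) with ((q ^+ n.+1)^-1).
by rewrite -exprVn E mulfK // qmqi_neq0.
Qed.
Lemma qint0 : qint 0 = 0. Proof. apply: qint_eq. rewrite !expr0 subrr mul0r. by []. Qed.
Lemma qint1 : qint 1 = 1. Proof. apply: qint_eq. ring: qV. Qed.
Lemma qint2 : qint 2 = q + q^-1. Proof. apply: qint_eq. ring: qV. Qed.
Lemma qint3 : qint 3 = q^+2 + 1 + q^-1^+2. Proof. apply: qint_eq. ring: qV. Qed.

Fixpoint allP (P : B * B -> Prop) (l : seq (B * B)) : Prop :=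
  match l with [::] => True | x :: l => P x /\ allP P l end.

Lemma allP_in P l : allP P l -> forall k, k \in l -> P k.
Proof.
elim: l => //= x l IH [Px Pl] k; rewrite inE => /predU1P [->//|]. exact: IH.
Qed.

Lemma coef_nil_key s p : p \notin [seq x.2 | x <- s] -> coef s p = 0.
Proof.
move=> np; rewrite /coef big_seq big1 // => x xs.
case: eqP => // E; case/negP: np; apply/mapP; exists x => //.
Qed.

Lemma coef_ext s t : allP (fun k => coef s k = coef t k) [seq x.2 | x <- s ++ t] ->
  coef s =1 coef t.
Proof.
move=> H p; case: (boolP (p \in [seq x.2 | x <- s ++ t])) => [/(@allP_in _ _ H)//|].
rewrite map_cat mem_cat negb_or => /andP [n1 n2].
by rewrite !coef_nil_key.
Qed.

Definition j0 : 'I_3 := @Ordinal 3 0 isT.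
Definition j1 : 'I_3 := @Ordinal 3 1 isT.
Definition j2 : 'I_3 := @Ordinal 3 2 isT.
Definition cinord (n : nat) : 'I_3 :=
  match n with 0 => j0 | 1 => j1 | 2 => j2 | _ => j0 end.
Lemma inord_c n : inord n = cinord n.
Proof. apply: val_inj; rewrite /inord val_insubd; by case: n => [|[|[|n]]]. Qed.

Ltac evalb :=
  repeat match goal with
  | |- context [if ?b then _ else _] =>
      let v := eval lazy in b in
      match v with true => change b with true | false => change b with false end;
      cbv beta iota zeta delta [fst snd]
  end.

Ltac evalexp :=
  repeat match goal with
  | |- context [qint ?n] =>
      let v := eval lazy in n in
      match v with Posz _ => idtac end;
      progress change n with v
  | |- context [q ^ ?n] =>
      let v := eval lazy in n in
      match v with Posz _ => idtac | Negz _ => idtac end;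
      progress change n with v
  end; rewrite ?qint0 ?qint1 ?qint2 ?qint3 ?qPos ?qNeg -?exprVn.

Ltac unfold_all :=
  cbv beta iota zeta delta [Delta_f Delta_e Delta_q zz zzinv zsum tscale top map cat
     ve vf vt vtinv vid vz vq fst snd mk Cvec allP b00 jup jdn]; rewrite ?inord_c.



Lemma qVn0 : q^-1 != 0. Proof. by rewrite invr_eq0 q_neq0. Qed.

Lemma nzq2 : q + q^-1 != 0.
Proof.
have -> : q + q^-1 = (q^+2 + 1) * q^-1 by ring: qV.
exact: (mulf_neq0 nz2 qVn0).
Qed.
Lemma nzq3 : q^+2 + 1 + q^-1^+2 != 0.
Proof.
have -> : q^+2 + 1 + q^-1^+2 = (q^+4 + q^+2 + 1) * q^-1^+2 by ring: qV.
exact: (mulf_neq0 nz3 (expf_neq0 _ qVn0)).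
Qed.
Lemma nzq4 : (q + q^-1) * (q^+2 + q^-1^+2) != 0.
Proof.
have -> : q^+2 + q^-1^+2 = (q^+4 + 1) * q^-1^+2 by ring: qV.
exact: (mulf_neq0 nzq2 (mulf_neq0 nz4 (expf_neq0 _ qVn0))).
Qed.

Lemma coef_scale c s p : coef (tscale c s) p = c * coef s p.
Proof.
rewrite /coef /tscale big_map mulr_sumr; apply: eq_bigr => x _ /=.
by case: ifP; rewrite ?mulr0.
Qed.

Lemma step_div c s t : inN s -> c != 0 -> coef s =1 coef (tscale c t) -> inN t.
Proof.
move=> Hs nz E; apply: (N_ext (N_scale c^-1 Hs)) => p.
rewrite coef_scale E coef_scale mulKf //.
Qed.

Ltac solve_coef :=
  apply: coef_ext; unfold_all;
  repeat match goal with |- _ /\ _ => split end; try exact I;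
  rewrite /coef ?big_cons ?big_nil; once evalb; once evalexp; ring: qV.


Lemma inN00 : inN (Cvec 0 0). Proof. apply: (N_ext N_base). solve_coef. Qed.
Lemma inN01 : inN (Cvec 0 1). Proof. apply: (N_ext (N_f i1 inN00)). solve_coef. Qed.
Lemma inN02 : inN (Cvec 0 2).
Proof. apply: (@step_div (qint 2) _ _ (N_f i1 inN01)); first by rewrite qint2; exact: nzq2. solve_coef. Qed.
Lemma inN12 : inN (Cvec 1 2).
Proof. apply: (@step_div (qint 3) _ _ (N_f i1 inN02)); first by rewrite qint3; exact: nzq3. solve_coef. Qed.
Lemma inN22 : inN (Cvec 2 2).
Proof. apply: (@step_div ((q + q^-1) * (q^+2 + q^-1^+2)) _ _ (N_f i1 inN12)). exact: nzq4.
  solve_coef. Qed.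
Lemma inN21 : inN (Cvec 2 1).
Proof. apply: (N_ext (N_add (N_e i0 inN02) (N_scale (-1) (N_zsum inN12)))). solve_coef. Qed.
Lemma inN11 : inN (Cvec 1 1).
Proof. apply: (N_ext (N_e i1 inN21)). solve_coef. Qed.
Lemma inN10 : inN (Cvec 1 0).
Proof. apply: (@step_div (qint 2) _ _ (N_add (N_e i1 inN11) (N_scale (- qint 2) (N_zsum inN01)))).
  by rewrite qint2; exact: nzq2.
  solve_coef.
Qed.
Lemma inN20 : inN (Cvec 2 0).
Proof. apply: (@step_div (qint 2) _ _ (N_e i0 inN10)).
  by rewrite qint2; exact: nzq2. solve_coef. Qed.

Definition aa (i j : 'I_3) (p : B * B) : K :=
  if p == lead i j then 0 else - coef (Cvec i j) p.

Lemma in_qZq0 : in_qZq 0.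
Proof. exists 0%N, (fun _ => 0); by rewrite big_ord0. Qed.

Lemma part2 (i j : 'I_3) :
  lead i j \in [seq x.2 | x <- Cvec i j] ->
  allP (fun k => in_qZq (aa i j k) /\
     coef (Cvec i j) k = (k == lead i j)%:R - (if inBij i j k then aa i j k else 0))
     [seq x.2 | x <- Cvec i j] ->
  exists a : B * B -> K,
        (forall p, inBij i j p -> in_qZq (a p)) /\
        (forall p, coef (Cvec i j) p =
                   (p == lead i j)%:R - (if inBij i j p then a p else 0)).
Proof.
move=> Hl H; exists (aa i j); split => p.
  move=> _; case: (boolP (p \in [seq x.2 | x <- Cvec i j])) => [/(@allP_in _ _ H) []//|np].
  rewrite /aa coef_nil_key // oppr0; case: eqP => _; exact: in_qZq0.
case: (boolP (p \in [seq x.2 | x <- Cvec i j])) => [/(@allP_in _ _ H) []//|np].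
have pl : (p == lead i j) = false.
  by apply/negbTE; apply: contra np => /eqP->.
rewrite /aa pl coef_nil_key // oppr0 /=; by case: ifP => _; rewrite mulr0n subr0.
Qed.

Lemma qzq_of (l : seq int) x :
  x = \sum_(k < size l) (nth 0 l k)%:~R * q ^+ k.+1 -> in_qZq x.
Proof. by move=> ->; exists (size l), (nth 0 l). Qed.

Ltac qzq1 l := apply: (@qzq_of l); rewrite /= ?big_ord_recr ?big_ord0 /=; ring: qV.
Ltac qzq := first [qzq1 [:: 0%Z] | qzq1 [:: (-1)%Z] | qzq1 [:: 0%Z; (-1)%Z]
  | qzq1 [:: 0%Z; 0%Z; 0%Z; (-1)%Z] | qzq1 [:: (-1)%Z; 0%Z; (-1)%Z]].

Ltac evaltrue := match goal with |- is_true ?b =>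
   let v := eval lazy in b in change (is_true v) end; exact isT.

Ltac part2_tac :=
  apply: part2; [cbv delta [j0 j1 j2 nat_of_ord] beta iota; unfold_all; evaltrue|];
  cbv delta [aa j0 j1 j2 nat_of_ord] beta iota; unfold_all;
  repeat match goal with |- _ /\ _ => split end; try exact I;
  rewrite /coef ?big_cons ?big_nil; cbv delta [nat_of_bool];
  once evalb; once evalexp;
  match goal with |- in_qZq _ => qzq | |- _ => ring: qV end.


Theorem mainTheorem1 :
  forall i j : 'I_3,
    inN (Cvec i j) /\
    (exists a : B * B -> K,
        (forall p, inBij i j p -> in_qZq (a p)) /\
        (forall p, coef (Cvec i j) p =
                   (p == lead i j)%:R - (if inBij i j p then a p else 0))) /\
    Hen (hij i j, i) (0, j) = 0.
Proof.
move=> i j.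
have E : forall (k : 'I_3), k = j0 \/ k = j1 \/ k = j2.
  move=> [[|[|[|k]]] Hk]; [left|right;left|right;right|by []]; exact: val_inj.
have [->|[->|->]] := E i; have [->|[->|->]] := E j;
  (split; [ first [exact inN00|exact inN01|exact inN02|exact inN10|exact inN11
              |exact inN12|exact inN20|exact inN21|exact inN22]
          | split; [part2_tac | vm_compute; reflexivity]]).
Qed.
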